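(* Let $n \in \mathbb{Z}_{>0}$, $m \in \mathbb{Z}_{\geq 0}$ and $M=2m+1$. For $\pi\in\mathrm{QTCPP}(n,M)$ define $(\pi',t)$ by $\pi'_{i,j}=\pi_{i,j}-m-1$ if $i+j<n+1$, $\pi'_{i,j}=\max(\pi_{i,j}-m-1,\,m-\pi_{i,j})$ if $i+j=n+1$, and $t_i=0$ if $\pi_{i,n+1-i}\ge m+1$, $t_i=1$ if $\pi_{i,n+1-i}<m+1$ ($1\le i\le n$). Then $\pi\mapsto(\pi',t)$ is a bijection $\mathrm{QTCPP}(n,M)\to\mathrm{stairPP}(n,m)\times\{0,1\}^n$, and its inverse is given by $\pi_{i,j}=m-\pi'_{i,j}$ if $i+j=n+1$ and $t_i=1$, and $\pi_{i,j}=m+1+\pi'_{i,j}$ otherwise.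
   Context: $\mathrm{stairPP}(n,K)$ is the set of arrays $\pi=(\pi_{i,j})$ of nonnegative integers indexed by cells $(i,j)$, $i,j\ge1$, $i+j\le n+1$, weakly decreasing along rows and columns, with $\pi_{1,1}\le K$. $\mathrm{QTCPP}(n,M)$ is the set of $\pi\in\mathrm{stairPP}(n,M)$ such that (1) $\pi_{i,j}\ge M-\pi_{i-1,j}$ whenever $i+j=n+1$ and $2\le i\le n$, and (2) $\pi_{i,j}\ge M-\pi_{i,j-1}$ whenever $i+j=n+1$ and $2\le j\le n$. *)

(* Defs.v *)
From mathcomp Require Import all_boot.
Set Implicit Arguments. Unset Strict Implicit. Unset Printing Implicit Defensive.

(* Cells (i,j) of the staircase, 1-indexed: i,j >= 1, i + j <= n + 1.
   Coordinates are stored in 'I_n.+2 (values 0..n+1). *)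
Definition cell (n : nat) :=
  {p : 'I_n.+2 * 'I_n.+2 | [&& 0 < p.1, 0 < p.2 & p.1 + p.2 <= n.+1]}.

Definition arr (n : nat) := {ffun cell n -> nat}.

Definition ci n (c : cell n) : nat := (val c).1.
Definition cj n (c : cell n) : nat := (val c).2.

(* Entry pi_{i,j} (1-indexed); 0 outside the staircase (never used there). *)
Definition entry n (pi : arr n) (i j : nat) : nat :=
  odflt 0 (omap pi (insub ((inord i : 'I_n.+2), (inord j : 'I_n.+2)) : option (cell n))).

Definition is_cell (n i j : nat) : bool := [&& 0 < i, 0 < j & i + j <= n.+1].

Definition stairPP (n K : nat) (pi : arr n) : Prop :=
  (forall i j, is_cell n i j -> is_cell n i j.+1 -> entry pi i j.+1 <= entry pi i j) /\
  (forall i j, is_cell n i j -> is_cell n i.+1 j -> entry pi i.+1 j <= entry pi i j) /\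
  (is_cell n 1 1 -> entry pi 1 1 <= K).
Arguments stairPP : clear implicits.

(* QTCPP(n,M); nat truncated subtraction is harmless here:
   a >= M - b (in Z) iff a >= M - b (truncated, in nat). *)
Definition QTCPP (n M : nat) (pi : arr n) : Prop :=
  stairPP n M pi /\
  (forall i j, i + j = n.+1 -> 2 <= i <= n -> M - entry pi i.-1 j <= entry pi i j) /\
  (forall i j, i + j = n.+1 -> 2 <= j <= n -> M - entry pi i j.-1 <= entry pi i j).
Arguments QTCPP : clear implicits.

(* t in {0,1}^n is encoded as {ffun 'I_n -> bool}: t_i = 1 iff t (i-1) = true. *)
Definition tvec (n : nat) := {ffun 'I_n -> bool}.
Definition tval n (t : tvec n) (i : nat) : bool :=
  odflt false (omap t (insub i.-1 : option 'I_n)).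

(* On QTCPP, pi_{i,j} >= m+1 off the antidiagonal, so
   truncated subtraction agrees with integer subtraction; on the antidiagonal,
   max(pi-m-1, m-pi) computed with truncated subtraction agrees with the integer max. *)
Definition phi_arr n m (pi : arr n) : arr n :=
  [ffun c => if ci c + cj c < n.+1 then pi c - m.+1
             else maxn (pi c - m.+1) (m - pi c)].
Definition phi_t n m (pi : arr n) : tvec n :=
  [ffun i : 'I_n => ~~ (m.+1 <= entry pi i.+1 (n - i))].
Definition phi n m (pi : arr n) : arr n * tvec n := (phi_arr m pi, phi_t m pi).

Definition psi n m (p : arr n) (t : tvec n) : arr n :=
  [ffun c => if (ci c + cj c == n.+1) && tval t (ci c) then m - p c
             else m.+1 + p c].

(* Main.v *)
Require Import Defs.
From mathcomp Require Import all_boot.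
From mathcomp Require Import zify.
Set Implicit Arguments. Unset Strict Implicit.

Lemma entry_cell n (pi : arr n) (c : cell n) : entry pi (ci c) (cj c) = pi c.
Proof.
rewrite /entry /ci /cj !inord_val -surjective_pairing valK /=. done.
Qed.

Lemma entryP n i j : is_cell n i j ->
  exists c : cell n, [/\ ci c = i, cj c = j & forall pi : arr n, entry pi i j = pi c].
Proof.
move=> /and3P[hi hj hij].
have hi' : i < n.+2 by lia.
have hj' : j < n.+2 by lia.
pose x : 'I_n.+2 * 'I_n.+2 := (inord i, inord j).
have P : [&& 0 < x.1, 0 < x.2 & x.1 + x.2 <= n.+1].
  by rewrite /= !inordK //; apply/and3P.
pose c : cell n := exist _ x P.
have e1 : ci c = i by rewrite /ci /= inordK.
have e2 : cj c = j by rewrite /cj /= inordK.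
exists c; split => // pi; by rewrite -{1}e1 -{1}e2 entry_cell.
Qed.

Lemma cellP n (c : cell n) : [/\ 0 < ci c, 0 < cj c & ci c + cj c <= n.+1].
Proof. rewrite /ci /cj; case: c => [[a b] /= H]; by case/and3P: (H). Qed.

Lemma tvalE n (t : tvec n) (k : 'I_n) : Defs.tval t k.+1 = t k.
Proof.
rewrite /Defs.tval /=; case: insubP => [k' _ e|]; last by rewrite ltn_ord.
by rewrite /= (_ : k' = k) //; apply: val_inj.
Qed.

Lemma stair_ub n K (p : arr n) : stairPP n K p ->
  forall i j, is_cell n i j -> entry p i j <= K.
Proof.
move=> [hr [hd h11]].
have row : forall i k, is_cell n i k.+1 -> entry p i k.+1 <= entry p i 1.
  move=> i; elim=> [//|k IH] hc.
  have hc' : is_cell n i k.+1 by move: hc; rewrite /is_cell; lia.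
  apply: leq_trans (IH hc'); exact: hr.
have col : forall k, is_cell n k.+1 1 -> entry p k.+1 1 <= entry p 1 1.
  elim=> [//|k IH] hc.
  have hc' : is_cell n k.+1 1 by move: hc; rewrite /is_cell; lia.
  apply: leq_trans (IH hc'); exact: hd.
move=> [|i] [|j] hc; try by move: hc; rewrite /is_cell.
have c1 : is_cell n i.+1 1 by move: hc; rewrite /is_cell; lia.
have c0 : is_cell n 1 1 by move: hc; rewrite /is_cell; lia.
apply: leq_trans (row _ _ hc) _; apply: leq_trans (col _ c1) _; exact: h11.
Qed.

Lemma qtc_lb n m (pi : arr n) : QTCPP n (2 * m + 1) pi ->
  forall i j, is_cell n i j -> i + j <= n -> m.+1 <= entry pi i j.
Proof.
move=> [[hr [hd h11]] [c1 c2]].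
have diag : forall i j, is_cell n i j -> i + j = n -> m.+1 <= entry pi i j.
  move=> i j hc e.
  have hc' : is_cell n i.+1 j by move: hc; rewrite /is_cell; lia.
  have := hd _ _ hc hc'.
  have := c1 i.+1 j ltac:(lia) ltac:(move: hc; rewrite /is_cell; lia).
  rewrite /=; lia.
have row : forall i j k, 0 < j -> is_cell n i (j + k) -> entry pi i (j + k) <= entry pi i j.
  move=> i j k j0; elim: k => [|k IH] hc; first by rewrite addn0.
  have hc' : is_cell n i (j + k) by move: hc; rewrite /is_cell; lia.
  apply: leq_trans (IH hc'); rewrite addnS; apply: hr => //; by rewrite -addnS.
move=> i j hc hle.
have hc' : is_cell n i (j + (n - i - j)) by move: hc hle; rewrite /is_cell; lia.
have j0 : 0 < j by move: hc; rewrite /is_cell; lia.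
apply: leq_trans (row _ _ _ j0 hc').
apply: diag => //; move: hc hle; rewrite /is_cell; lia.
Qed.

Theorem mainTheorem3 (n m : nat) : 0 < n ->
  let M := 2 * m + 1 in
  (forall pi : arr n, QTCPP n M pi -> stairPP n m (phi m pi).1) /\
  (forall (p : arr n) (t : tvec n), stairPP n m p -> QTCPP n M (psi m p t)) /\
  (forall pi : arr n, QTCPP n M pi -> psi m (phi m pi).1 (phi m pi).2 = pi) /\
  (forall (p : arr n) (t : tvec n), stairPP n m p -> phi m (psi m p t) = (p, t)).
Proof.
move=> n0 M; split; [|split; [|split]].
- move=> pi Q; have L := qtc_lb Q.
  case: Q => [[hr [hd h11]] [c1 c2]].
  split; [|split].
  + move=> i j hc hc'.
    have [c [ei ej E]] := entryP hc; have [c' [ei' ej' E']] := entryP hc'.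
    rewrite E E' /= !ffunE ei ej ei' ej'.
    have := hr _ _ hc hc'; rewrite E E' => hm.
    have := cellP c; rewrite ei ej => -[h1 h2 h3].
    have := cellP c'; rewrite ei' ej' => -[h1' h2' h3'].
    case: ltnP => l1; case: ltnP => l2; try lia.
    have := L _ _ hc ltac:(lia); rewrite E => hL.
    have := c2 i j.+1 ltac:(lia) ltac:(lia); rewrite /= E E'; lia.
  + move=> i j hc hc'.
    have [c [ei ej E]] := entryP hc; have [c' [ei' ej' E']] := entryP hc'.
    rewrite E E' /= !ffunE ei ej ei' ej'.
    have := hd _ _ hc hc'; rewrite E E' => hm.
    have := cellP c; rewrite ei ej => -[h1 h2 h3].
    have := cellP c'; rewrite ei' ej' => -[h1' h2' h3'].
    case: ltnP => l1; case: ltnP => l2; try lia.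
    have := L _ _ hc ltac:(lia); rewrite E => hL.
    have := c1 i.+1 j ltac:(lia) ltac:(lia); rewrite /= E E'; lia.
  + move=> hc; have [c [ei ej E]] := entryP hc.
    have := h11 hc; rewrite E => hb.
    rewrite E /= !ffunE ei ej.
    case: ltnP => l1; last lia.
    have := L _ _ hc ltac:(lia); rewrite E; lia.
- move=> p t S; have U := stair_ub S.
  case: S => [hr [hd h11]].
  split; [split; [|split]|split].
  + move=> i j hc hc'.
    have [c [ei ej E]] := entryP hc; have [c' [ei' ej' E']] := entryP hc'.
    rewrite E E' /= !ffunE ei ej ei' ej'.
    have := hr _ _ hc hc'; rewrite E E' => hm.
    have := U _ _ hc; have := U _ _ hc'; rewrite E E' => u1 u2.
    have := cellP c; rewrite ?ei ?ej => -[h1 h2 h3].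
    have := cellP c'; rewrite ?ei' ?ej' => -[h1' h2' h3'].
    case: (Defs.tval t i); rewrite ?andbT ?andbF /=; (do ?(case: eqP => ?)); lia.
  + move=> i j hc hc'.
    have [c [ei ej E]] := entryP hc; have [c' [ei' ej' E']] := entryP hc'.
    rewrite E E' /= !ffunE ei ej ei' ej'.
    have := hd _ _ hc hc'; rewrite E E' => hm.
    have := U _ _ hc; have := U _ _ hc'; rewrite E E' => u1 u2.
    have := cellP c; rewrite ?ei ?ej => -[h1 h2 h3].
    have := cellP c'; rewrite ?ei' ?ej' => -[h1' h2' h3'].
    case: (Defs.tval t i); case: (Defs.tval t i.+1); rewrite ?andbT ?andbF /=; (do ?(case: eqP => ?)); lia.
  + move=> hc; have [c [ei ej E]] := entryP hc.
    have := U _ _ hc; rewrite E => hb.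
    rewrite E /= !ffunE ei ej.
    case: (Defs.tval t 1); rewrite ?andbT ?andbF /=; (do ?(case: eqP => ?)); lia.
  + move=> i j e hi.
    have hc : is_cell n i j by rewrite /is_cell; lia.
    have hc' : is_cell n i.-1 j by rewrite /is_cell; lia.
    have [c [ei ej E]] := entryP hc; have [c' [ei' ej' E']] := entryP hc'.
    rewrite E E' /= !ffunE ei ej ei' ej'.
    have := hd _ _ hc' ltac:(rewrite prednK //; lia); rewrite prednK; last lia.
    rewrite E E' => hm.
    have := U _ _ hc; have := U _ _ hc'; rewrite E E' => u1 u2.
    have := cellP c; rewrite ?ei ?ej => -[h1 h2 h3].
    have := cellP c'; rewrite ?ei' ?ej' => -[h1' h2' h3'].
    case: (Defs.tval t i); case: (Defs.tval t i.-1); rewrite ?andbT ?andbF /=; (do ?(case: eqP => ?)); lia.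
  + move=> i j e hj.
    have hc : is_cell n i j by rewrite /is_cell; lia.
    have hc' : is_cell n i j.-1 by rewrite /is_cell; lia.
    have [c [ei ej E]] := entryP hc; have [c' [ei' ej' E']] := entryP hc'.
    rewrite E E' /= !ffunE ei ej ei' ej'.
    have := hr _ _ hc' ltac:(rewrite prednK //; lia); rewrite prednK; last lia.
    rewrite E E' => hm.
    have := U _ _ hc; have := U _ _ hc'; rewrite E E' => u1 u2.
    have := cellP c; rewrite ?ei ?ej => -[h1 h2 h3].
    have := cellP c'; rewrite ?ei' ?ej' => -[h1' h2' h3'].
    case: (Defs.tval t i); rewrite ?andbT ?andbF /=; (do ?(case: eqP => ?)); lia.
- move=> pi Q; have L := qtc_lb Q.
  apply/ffunP => c; rewrite !ffunE /=.
  have := cellP c => -[h1 h2 h3].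
  have hk : (ci c).-1 < n by lia.
  have ek : ci c = (Ordinal hk).+1 by rewrite /= prednK.
  case: eqP => ed.
  + rewrite ek tvalE ffunE -ek.
    have -> : n - (Ordinal hk) = cj c by rewrite /=; lia.
    rewrite entry_cell.
    have -> : (ci c + cj c < n.+1) = false by lia.
    case: (ltnP m (pi c)) => l2 /=; move: l2; move: (pi c) => x l2; lia.
  + have := L (ci c) (cj c) ltac:(rewrite /is_cell; lia) ltac:(lia).
    rewrite entry_cell => hL.
    have -> : (ci c + cj c < n.+1) = true by lia.
    by rewrite /=; move: hL; move: (pi c) => x hL; lia.
- move=> p t S; have U := stair_ub S.
  rewrite /phi; congr (_, _).
  + apply/ffunP => c; rewrite !ffunE.
    have := cellP c => -[h1 h2 h3].
    have := U (ci c) (cj c) ltac:(rewrite /is_cell; lia); rewrite entry_cell => u.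
    move: u; move: (p c) => x u.
    case: (Defs.tval t (ci c)); rewrite ?andbT ?andbF /=; (do ?(case: eqP => ?)); (do ?(case: ltnP => ?)); lia.
  + apply/ffunP => k; rewrite !ffunE.
    have hc : is_cell n k.+1 (n - k) by rewrite /is_cell; have := ltn_ord k; lia.
    have [c [ei ej E]] := entryP hc.
    have := U _ _ hc; rewrite E => u.
    rewrite E ffunE ei ej tvalE.
    have -> : (k.+1 + (n - k) == n.+1) = true by apply/eqP; have := ltn_ord k; lia.
    case: (t k) => /=; lia.
Qed.
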